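(* Let $\mathcal{G}=(\vec V,\vec E)$ be a DAG and let $V_i,V_j\in\vec V$ be non-adjacent. Then every independence preserving augmentation $(\vec S_i^+,\vec S_j^+)$ of $(V_i,V_j)$ is disjoint from the immoral descendants of $V_i,V_j$: $\operatorname{\mathbf{IMD}}(V_i,V_j)\cap\vec S_i^+=\emptyset$ and $\operatorname{\mathbf{IMD}}(V_i,V_j)\cap\vec S_j^+=\emptyset$.
   Context: For sets $\vec S_i,\vec S_j\subseteq\vec V\setminus\{V_i,V_j\}$, the ordered pair $(\vec S_i^+,\vec S_j^+)=(\vec S_i\cup\{V_i\},\vec S_j\cup\{V_j\})$ is an independence preserving augmentation (IPA) of $(V_i,V_j)$ if there is a set $\vec C\subset\vec V$ (the IPA conditioning set) such that $\vec S_i^+$ and $\vec S_j^+$ are d-separated by $\vec C$ in $\mathcal{G}$. $\operatorname{\mathbf{CH}}(V)$ denotes the children and $\operatorname{\mathbf{DE}}(V)$ the (strict) descendants of $V$ in $\mathcal{G}$; $\operatorname{\mathbf{CH}}(V_i,V_j)=\operatorname{\mathbf{CH}}(V_i)\cap\operatorname{\mathbf{CH}}(V_j)$ and for a set, $\operatorname{\mathbf{DE}}$ of the set is the union of the descendants. The immoral descendants are $\operatorname{\mathbf{IMD}}(V_i,V_j)=\operatorname{\mathbf{CH}}(V_i,V_j)\cup\operatorname{\mathbf{DE}}(\operatorname{\mathbf{CH}}(V_i,V_j))$. *)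

(* Defs.v *)
(* a DAG is a finite type of vertices T with a directed edge
   relation E : rel T (E u v means u -> v). *)
From mathcomp Require Import all_boot.
Set Implicit Arguments. Unset Strict Implicit. Unset Printing Implicit Defensive.

Section Graph.
Variables (T : finType) (E : rel T).

Definition desc (u v : T) : bool := [exists w, E u w && connect E w v].

Definition acyclic : Prop := forall v, ~~ desc v v.

Definition adj (u v : T) : bool := E u v || E v u.

Definition CH (v : T) : {set T} := [set w | E v w].
Definition DE (v : T) : {set T} := [set w | desc v w].
Definition DEs (A : {set T}) : {set T} := [set w | [exists c in A, desc c w]].
Definition CH2 (vi vj : T) : {set T} := CH vi :&: CH vj.
Definition IMD (vi vj : T) : {set T} := CH2 vi vj :|: DEs (CH2 vi vj).

Definition collider (a b c : T) : bool := E a b && E c b.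

Definition blocked (Z : {set T}) (a b c : T) : bool :=
  if collider a b c then (b \notin Z) && [forall d, desc b d ==> (d \notin Z)]
  else b \in Z.

(* X and Y are d-separated by Z: every (simple) path in the skeleton from a
   vertex of X to a vertex of Y, represented as the vertex list x :: s, has
   some interior vertex (index k with 0 < k < size s) at which it is blocked. *)
Definition dsep (X Y Z : {set T}) : Prop :=
  forall (x : T) (s : seq T),
    x \in X -> last x s \in Y -> path adj x s -> uniq (x :: s) ->
    exists k : nat, (0 < k < size s) &&
      blocked Z (nth x (x :: s) k.-1) (nth x (x :: s) k) (nth x (x :: s) k.+1).

(* (Si :|: {vi}, Sj :|: {vj}) is an IPA of (vi, vj) *)
Definition IPA (vi vj : T) (Si Sj : {set T}) : Prop :=
  Si \subset ~: [set vi; vj] /\ Sj \subset ~: [set vi; vj] /\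
  exists C : {set T}, dsep (vi |: Si) (vj |: Sj) C.

End Graph.

(* Main.v *)
Require Import Defs.
From mathcomp Require Import all_boot.
From mathcomp Require Import zify.

Lemma blocked_sym (T : finType) (E : rel T) Z a b c :
  blocked E Z a b c = blocked E Z c b a.
Proof. by rewrite /blocked /collider andbC. Qed.

Lemma dsep_sym (T : finType) (E : rel T) X Y Z :
  dsep E X Y Z -> dsep E Y X Z.
Proof.
move=> H y s Hy Hl Hp Hu.
set x' := last y s; set s' := rev (belast y s).
have e : x' :: s' = rev (y :: s) by rewrite /x' /s' [y :: s]lastI rev_rcons.
have Hsz : size s' = size s by rewrite /s' size_rev size_belast.
have [|||k /andP[/andP[k0 ks] Hb]] := H x' s' Hl.
- have -> : last x' s' = last y (x' :: s') by [].
  by rewrite e rev_cons last_rcons.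
- rewrite /x' /s' rev_path; apply: sub_path Hp => u v; by rewrite /adj orbC.
- by rewrite e rev_uniq.
rewrite Hsz in ks.
exists (size s - k); apply/andP; split; first by apply/andP; split; lia.
have nr : forall i, i <= size s -> nth x' (x' :: s') i = nth y (y :: s) (size s - i).
  move=> i hi; rewrite e nth_rev /=; last by lia.
  rewrite (set_nth_default y) /=; last by lia.
  by congr nth; lia.
rewrite blocked_sym.
move: Hb; rewrite !nr; try lia.
have -> : size s - k.-1 = (size s - k).+1 by lia.
have -> : size s - k.+1 = (size s - k).-1 by lia.
by [].
Qed.

Lemma core (T : finType) (E : rel T) X Y C a b c w :
  acyclic E -> dsep E X Y C -> a \in X -> b \in Y -> E a c -> E b c ->
  w \in Y -> connect E c w -> a != b -> False.
Proof.
move=> Hac H aX bY Eac Ebc wY /connectP[p0 Hp0 Ew] ab; subst w.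
have cyc : forall u v, E u v -> connect E v u -> False.
  move=> u v Euv Cvu; move/negP: (Hac u); apply; apply/existsP; exists v.
  by rewrite Euv.
have ac : a != c.
  by apply/eqP => eac; apply: (cyc a c Eac); rewrite eac connect0.
have bc : b != c.
  by apply/eqP => ebc; apply: (cyc b c Ebc); rewrite ebc connect0.
have [|||k /andP[/andP[k0 ks] Hb]] := H a [:: c; b] aX => //.
- by rewrite /= /adj Eac Ebc orbT.
- by rewrite /= !inE negb_or ac ab eq_sym bc.
have k1 : k = 1 by move: ks k0 Hb; case: k => [|[|]].
subst k; clear k0 ks.
move: Hb; rewrite /blocked /collider /= Eac Ebc /= => /andP[cC /forallP dC].
move: wY; case: (shortenP Hp0) => p Hp Hu _ wY.
have [|||k /andP[/andP[k0 ks] Hb]] := H a (c :: p) aX.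
- by [].
- have Hp' : path E a (c :: p) by rewrite /= Eac.
  by apply: sub_path Hp' => u v Euv; rewrite /adj Euv.
- rewrite cons_uniq Hu andbT.
  apply/negP => /(path_connect Hp) Cca; exact: (cyc a c Eac Cca).
have Hp' : path E a (c :: p) by rewrite /= Eac.
case: k k0 ks Hb => // j _ ks Hb.
have Ek1 : E (nth a (a :: c :: p) j) (nth a (c :: p) j).
  by have := (pathP a Hp' j); apply; exact: ltnW.
have Ek2 : E (nth a (c :: p) j) (nth a (c :: p) j.+1).
  by have := (pathP a Hp' j.+1); apply.
have mem : nth a (c :: p) j \in c :: p.
  by apply: mem_nth; exact: ltnW.
move: Hb; change (blocked E C (nth a (a :: c :: p) j) (nth a (c :: p) j) (nth a (c :: p) j.+1) -> False).
rewrite /blocked /collider.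
case: ifP => [/andP[_ E3] | _].
  by exfalso; apply: (cyc _ _ Ek2); apply: connect1.
move: mem; rewrite inE => /orP[/eqP -> | m]; first by rewrite (negbTE cC).
have dP : forall x, x \in p -> desc E c x.
  move=> x xm; have Hp2 : path E c p := Hp.
  destruct p as [|d q]; first by [].
  move: Hp2 => /= /andP[Ecd Hq].
  apply/existsP; exists d; rewrite Ecd /=.
  exact: (path_connect Hq xm).
have dm := dP _ m.
by have := dC (nth a (c :: p) j); rewrite dm /= => /negbTE ->.
Qed.

Arguments core {T E X Y C a b c w}.
Arguments dsep_sym {T E X Y Z}.

Theorem lemma5 (T : finType) (E : rel T) (vi vj : T) (Si Sj : {set T}) :
  acyclic E -> vi != vj -> ~~ adj E vi vj ->
  IPA E vi vj Si Sj ->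
  IMD E vi vj :&: (vi |: Si) = set0 /\ IMD E vi vj :&: (vj |: Sj) = set0.
Proof.
move=> Hac ij _ [_ [_ [C HC]]].
have key : forall w, w \in IMD E vi vj ->
    exists c, [/\ E vi c, E vj c & connect E c w].
  move=> w; rewrite /IMD /CH2 /CH /DEs !inE => /orP[/andP[h1 h2]|].
    by exists w; rewrite h1 h2 connect0.
  move=> /existsP[c /andP[]]; rewrite !inE => /andP[h1 h2] /existsP[d /andP[Ecd Cdw]].
  exists c; split => //; apply: connect_trans (connect1 Ecd) Cdw.
split; apply/setP => w; rewrite inE in_set0; apply/negP => /andP[hI hS];
  have [c [h1 h2 h3]] := key w hI.
- apply: (core Hac (dsep_sym HC) _ _ h2 h1 hS h3); rewrite ?inE ?eqxx //.
  by rewrite eq_sym.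
- by apply: (core Hac HC _ _ h1 h2 hS h3); rewrite ?inE ?eqxx.
Qed.
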